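(* Let $L$ be a finite lattice, $\varphi$ a capacity on $L$, and $\Phi\in M_\infty(\mathcal L)$ with $\Phi(\langle x\rangle^* )=\varphi(x)$ for all $x\in L$. Then the following are equivalent: (i) $\varphi$ is completely alternating and $\Phi$ is the dual Möbius extension of $\varphi$, i.e. the Möbius inverse $F$ of $\Phi$ vanishes outside $\{U\in\mathcal L: L\setminus U=\{y\in L:y\le c\}\text{ for some }c\in L\}$; (ii) $\Phi(\langle a,b\rangle^* )=\varphi(a)+\varphi(b)-\varphi(a\vee b)$ for every pair $\{a,b\}$ of elements of $L$.
   Context: $L$ is a finite lattice with minimum $\hat0$, maximum $\hat1$, join $\vee$. A capacity on $L$ is a monotone function $\varphi$ with $\varphi(\hat0)=0$, $\varphi(\hat1)=1$. Dual differences: $\Delta_b\varphi(x)=\varphi(x)-\varphi(x\vee b)$, $\Delta_{b_1,\ldots,b_n}\varphi=\Delta_{b_n}(\Delta_{b_1,\ldots,b_{n-1}}\varphi)$; $\varphi$ is completely alternating if $\Delta_{b_1,\ldots,b_n}\varphi\le0$ for all $b_1,\dots,b_n\in L$, $n\ge1$. For $A\subseteq L$, $\langle A\rangle^*=\{x:x\ge a\text{ for some }a\in A\}$. $\mathcal L$ is the set of nonempty up-sets of $L$, ordered by $U\preceq V$ iff $U\supseteq V$ (a distributive lattice with meet = union); $M_\infty(\mathcal L)$ is the set of nonnegative completely monotone functions on it (all iterated differences $\Phi(W)-\Phi(W\wedge U)$ nonnegative). The Möbius inverse of $\Phi$ is the unique $F$ with $\Phi(U)=\sum_{V\preceq U}F(V)$;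 equivalently $F$ is the distribution of an $\mathcal L$-valued random variable $\mathcal X$ with $\Phi(U)=\mathbb P(\mathcal X\supseteq U)$. *)

(* Defs.v *)
From HB Require Import structures.
From mathcomp Require Import all_boot all_order all_algebra.
From mathcomp Require Import reals.
Set Implicit Arguments. Unset Strict Implicit. Unset Printing Implicit Defensive.
Import Order.TTheory GRing.Theory Num.Theory.
Local Open Scope ring_scope.

Section Defs.
Variables (d : Order.disp_t) (L : finTBLatticeType d) (R : realType).

Definition capacity (phi : L -> R) : Prop :=
  [/\ (forall x y : L, (x <= y)%O -> phi x <= phi y),
      phi (\bot)%O = 0 & phi (\top)%O = 1].

Definition dual_diff (b : L) (f : L -> R) : L -> R :=
  fun x => f x - f (Order.join x b).

Definition dual_diffs (bs : seq L) (f : L -> R) : L -> R :=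
  foldl (fun g b => dual_diff b g) f bs.

Definition completely_alternating (phi : L -> R) : Prop :=
  forall (bs : seq L), (0 < size bs)%N -> forall x : L, dual_diffs bs phi x <= 0.

Definition upclosure (A : {set L}) : {set L} :=
  [set x | [exists a in A, (a <= x)%O]].

(* membership in the lattice cal L of nonempty up-sets *)
Definition is_upset (U : {set L}) : bool :=
  (U != set0) && [forall x, forall y, (x \in U) && (x <= y)%O ==> (y \in U)].

(* In cal L (order: U <= V iff U \supseteq V) the meet is the union, so
   Delta_U Phi (W) = Phi W - Phi (W \wedge U) = Phi W - Phi (W :|: U). *)
Definition up_diff (U : {set L}) (Phi : {set L} -> R) : {set L} -> R :=
  fun W => Phi W - Phi (W :|: U).

Definition up_diffs (Us : seq {set L}) (Phi : {set L} -> R) : {set L} -> R :=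
  foldl (fun G U => up_diff U G) Phi Us.

Definition completely_monotone (Phi : {set L} -> R) : Prop :=
  (forall W, is_upset W -> 0 <= Phi W) /\
  (forall Us : seq {set L}, (0 < size Us)%N -> all is_upset Us ->
     forall W, is_upset W -> 0 <= up_diffs Us Phi W).

(* F is the Moebius inverse of Phi on cal L:
   Phi U = sum_{V in cal L, V <= U (i.e. V \supseteq U)} F V *)
Definition mobius_inverse (Phi F : {set L} -> R) : Prop :=
  forall U, is_upset U ->
    Phi U = \sum_(V : {set L} | is_upset V && (U \subset V)) F V.

Definition co_principal (U : {set L}) : Prop :=
  exists c : L, ~: U = [set y | (y <= c)%O].

End Defs.

(* Main.v *)
Require Import Defs.
From HB Require Import structures.
From mathcomp Require Import all_boot all_order all_algebra.
From mathcomp Require Import reals.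
From mathcomp Require Import lra.
Import Order.TTheory GRing.Theory Num.Theory.
Local Open Scope ring_scope.

Section Aux.
Variables (d : Order.disp_t) (L : finTBLatticeType d) (R : realType).
Implicit Types (A U V W : {set L}) (x y a b : L).

Definition up1 x : {set L} := upclosure [set x].

Lemma in_up1 x y : (y \in up1 x) = (x <= y)%O.
Proof.
rewrite /up1 /upclosure inE; apply/existsP/idP => [[z /andP[/set1P-> ->]]|h] //.
by exists x; rewrite set11.
Qed.

Lemma upsetP U : is_upset U -> forall x y, x \in U -> (x <= y)%O -> y \in U.
Proof.
case/andP=> _ /forallP h x y hx hy.
by move/forallP: (h x) => /(_ y); rewrite hx hy.
Qed.

Lemma up1_upset x : is_upset (up1 x).
Proof.
apply/andP; split; first by apply/set0Pn; exists x; rewrite in_up1.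
apply/forallP=> y; apply/forallP=> z; apply/implyP=>/andP[]; rewrite !in_up1.
exact: le_trans.
Qed.

Lemma setU_upset U W : is_upset U -> is_upset W -> is_upset (U :|: W).
Proof.
move=> hU hW; apply/andP; split.
  case/andP: hU => /set0Pn [x hx] _; apply/set0Pn; exists x; by rewrite in_setU hx.
apply/forallP=> y; apply/forallP=> z; apply/implyP=>/andP[]; rewrite !in_setU.
case/orP=> h hyz; apply/orP; [left; exact: upsetP hU _ _ h hyz|right; exact: upsetP hW _ _ h hyz].
Qed.

Lemma up1_sub x V : is_upset V -> (up1 x \subset V) = (x \in V).
Proof.
move=> hV; apply/idP/idP => [/subsetP h|hx].
  by apply: h; rewrite in_up1.
by apply/subsetP => y; rewrite in_up1; apply: upsetP hV _ _ hx.
Qed.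

Lemma up2E a b : upclosure [set a; b] = up1 a :|: up1 b.
Proof.
apply/setP => y; rewrite /upclosure inE in_setU !in_up1.
apply/existsP/orP => [[z /andP[/set2P[]-> h]]|[h|h]]; [by left|by right| |].
  by exists a; rewrite h set21.
by exists b; rewrite h set22.
Qed.

Lemma up1_bot : up1 \bot%O = setT.
Proof. by apply/setP => y; rewrite in_up1 le0x inE. Qed.

Lemma up1_joinl a b : up1 (Order.join a b) \subset up1 a.
Proof. apply/subsetP => y; rewrite !in_up1 leUx; by case/andP. Qed.
Lemma up1_joinr a b : up1 (Order.join a b) \subset up1 b.
Proof. apply/subsetP => y; rewrite !in_up1 leUx; by case/andP. Qed.

Lemma SU (A S T : {set L}) : S \subset T -> A :|: S :|: T = A :|: T.
Proof. by move=> h; rewrite -setUA (setUidPr h). Qed.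

Lemma coprin V : is_upset V -> V != setT ->
  (forall a b, a \notin V -> b \notin V -> Order.join a b \notin V) -> co_principal V.
Proof.
move=> hV hT hj.
have hbot : (\bot%O : L) \notin V.
  apply: contra hT => hb; apply/eqP/setP => y; rewrite inE.
  by apply: upsetP hV _ _ hb (le0x _).
pose c := (\join_(y in ~: V) y)%O.
have hc : c \notin V.
  rewrite /c; apply: (big_ind (fun z => z \notin V)) => //.
  by move=> i; rewrite in_setC.
exists c; apply/setP => y; rewrite in_setC inE.
apply/idP/idP => [hy|hyc].
  by apply: (joins_sup (fun i => i)); rewrite in_setC.
by apply: contra hc => hy; apply: upsetP hV _ _ hy hyc.
Qed.

Variables (Phi : {set L} -> R) (phi : L -> R).
Hypothesis hPhi : completely_monotone Phi.
Hypothesis hext : forall x : L, Phi (upclosure [set x]) = phi x.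

Lemma CM1 U W : is_upset U -> is_upset W -> Phi (U :|: W) <= Phi U.
Proof.
move=> hU hW; have := hPhi.2 [:: W] isT _ U hU.
by rewrite /= hW /= /up_diff subr_ge0; apply.
Qed.

Section II.
Hypothesis hii : forall a b : L,
     Phi (upclosure [set a; b]) = phi a + phi b - phi (Order.join a b).

Lemma Kzero x b A : is_upset A ->
  up_diffs [:: up1 x; up1 b] Phi (A :|: up1 (Order.join x b)) = 0.
Proof.
move=> hA.
have hall : all (@is_upset _ L) [:: up1 x; up1 b] by rewrite /= !up1_upset.
apply/eqP; rewrite eq_le; apply/andP; split; last first.
  by apply: hPhi.2 => //; apply: setU_upset => //; apply: up1_upset.
have K0 : up_diffs [:: up1 x; up1 b] Phi (up1 (Order.join x b)) = 0.
  rewrite /up_diffs /= /up_diff (setUidPr (up1_joinl x b)) (setUidPr (up1_joinr x b)).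
  rewrite -up2E hii /up1 !hext joinC; lra.
have := hPhi.2 [:: up1 x; up1 b; A] isT _ (up1 (Order.join x b)) (up1_upset _).
rewrite /= !up1_upset hA /= => /(_ isT).
rewrite -/(up_diffs [:: up1 x; up1 b] Phi) /up_diff.
move: K0; rewrite /up_diffs /= /up_diff (setUC _ A) => ->; lra.
Qed.

Lemma Iid A x b : is_upset A ->
  Phi (A :|: up1 x) + Phi (A :|: up1 b) =
  Phi (A :|: up1 x :|: up1 b) + Phi (A :|: up1 (Order.join x b)).
Proof.
move=> hA; have := Kzero x b A hA.
rewrite /up_diffs /= /up_diff (SU _ _ _ (up1_joinl x b)) (SU _ _ _ (up1_joinr x b)) setUAC.
lra.
Qed.

Lemma dd_rep bs : (0 < size bs)%N -> exists A, is_upset A /\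
  forall y, dual_diffs bs phi y = Phi (A :|: up1 y) - Phi A.
Proof.
elim/last_ind: bs => [//|bs b IH] _.
case: bs IH => [|b0 bs] IH.
  exists (up1 b); split; first exact: up1_upset.
  move=> y; rewrite /dual_diffs /= /dual_diff setUC -up2E hii /up1 !hext; lra.
have [A [hA hrep]] := IH isT.
exists (A :|: up1 b); split; first by apply: setU_upset => //; apply: up1_upset.
move=> y; rewrite /dual_diffs foldl_rcons -/(dual_diffs _ phi) /dual_diff !hrep.
have := Iid A y b hA; rewrite setUAC; lra.
Qed.

Lemma ca : completely_alternating phi.
Proof.
move=> bs hbs y; have [A [hA ->]] := dd_rep bs hbs.
rewrite subr_le0; apply: CM1 => //; exact: up1_upset.
Qed.
End II.

Section Mob.
Variable F : {set L} -> R.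
Hypothesis hF : mobius_inverse Phi F.

Lemma diffs_sum Ws : all (@is_upset _ L) Ws -> forall U, is_upset U ->
  up_diffs Ws Phi U = \sum_(V | is_upset V && (U \subset V) &&
                                 all (fun W => ~~ (W \subset V)) Ws) F V.
Proof.
elim/last_ind: Ws => [|Ws W IH] hW U hU.
  by rewrite /= hF //; apply: eq_bigl => V; rewrite andbT.
move: hW; rewrite all_rcons => /andP[hWW hWs].
rewrite /up_diffs foldl_rcons -/(up_diffs Ws Phi) /up_diff !IH //; last exact: setU_upset.
rewrite (bigID (fun V => W \subset V)) /=.
have -> : \sum_(i | (is_upset i && (U \subset i) && all (fun W0 => ~~ (W0 \subset i)) Ws) &&
            (W \subset i)) F i =
          \sum_(V | is_upset V && (U :|: W \subset V) && all (fun W0 => ~~ (W0 \subset V)) Ws) F V.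
  by apply: eq_bigl => V; rewrite subUset; case: is_upset; case: (U \subset V);
     case: (W \subset V); case: all.
have -> : \sum_(i | (is_upset i && (U \subset i) && all (fun W0 => ~~ (W0 \subset i)) Ws) &&
            ~~ (W \subset i)) F i =
          \sum_(V | is_upset V && (U \subset V) && all (fun W0 => ~~ (W0 \subset V)) (rcons Ws W)) F V.
  by apply: eq_bigl => V; rewrite all_rcons; case: is_upset; case: (U \subset V);
     case: (W \subset V); case: all.
lra.
Qed.

Lemma F_ge0 U : is_upset U -> U != setT -> 0 <= F U.
Proof.
move=> hU hT.
pose Ws := [seq up1 m | m <- enum (~: U)].
have hall : all (@is_upset _ L) Ws by apply/allP => W /mapP[m _ ->]; apply: up1_upset.
have hCn : ~: U != set0.
  by apply: contraNneq hT => h; rewrite -(setCK U) h setC0.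
have hsz : (0 < size Ws)%N by rewrite size_map -cardE card_gt0.
have <- : up_diffs Ws Phi U = F U.
  rewrite diffs_sum // (big_pred1 U) // => V /=.
  apply/idP/eqP => [/andP[/andP[hV hUV] hA]|->].
    apply/eqP; rewrite eqEsubset hUV andbT; apply/subsetP => m hm.
    apply/negPn/negP => hmU.
    have : up1 m \in Ws by apply: map_f; rewrite mem_enum in_setC.
    by move/(allP hA); rewrite up1_sub // hm.
  rewrite hU subxx /=; apply/allP => W /mapP[m hm ->].
  by rewrite up1_sub // -in_setC -mem_enum.
exact: hPhi.2.
Qed.

Hypothesis hii : forall a b : L,
     Phi (upclosure [set a; b]) = phi a + phi b - phi (Order.join a b).

Lemma vanish V0 a b : is_upset V0 -> a \notin V0 -> b \notin V0 ->
  Order.join a b \in V0 -> F V0 = 0.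
Proof.
move=> hV ha hb hab.
have := Kzero hii a b V0 hV.
rewrite (setUidPl _); last by rewrite up1_sub.
rewrite diffs_sum //; last by rewrite /= !up1_upset.
move/psumr_eq0P; apply.
  move=> V /andP[/andP[hV' _] /= /andP[h1 _]]; apply: F_ge0 => //.
  by apply: contraNneq h1 => ->; apply: subsetT.
by rewrite hV subxx /= !up1_sub // ha hb.
Qed.
End Mob.

Fixpoint G (n : nat) (U : {set L}) : R :=
  if n is n'.+1 then Phi U - \sum_(V | is_upset V && (U \proper V)) G n' V
  else Phi U.

Lemma Gstab n U : (#|~: U| <= n)%N -> G n.+1 U = G n U.
Proof.
elim: n U => [|n IH] U hU.
  have hUT : U = setT.
    by move: hU; rewrite leqn0 cards_eq0 => /eqP h; rewrite -(setCK U) h setC0.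
  rewrite /= big_pred0 ?subr0 // => V; rewrite hUT properE subsetT /=.
  by rewrite subTset; case: (V =P setT) => [->|]; rewrite ?andbF.
rewrite [LHS]/= [RHS]/=; congr (_ - _); apply: eq_bigr => V /andP[_ hp].
apply: IH; rewrite -ltnS; apply: leq_trans hU; apply: proper_card.
by rewrite properC.
Qed.

Definition F0 U := G #|L|.+1 U.

Lemma F0E U : F0 U = Phi U - \sum_(V | is_upset V && (U \proper V)) F0 V.
Proof.
rewrite {1}/F0 [LHS]/=; congr (_ - _); apply: eq_bigr => V _.
by rewrite /F0 Gstab // max_card.
Qed.

Lemma F0_mob : mobius_inverse Phi F0.
Proof.
move=> U hU; rewrite (bigD1 U) /=; last by rewrite hU subxx.
rewrite [F0 U]F0E.
have -> : \sum_(i | is_upset i && (U \subset i) && (i != U)) F0 i =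
          \sum_(V | is_upset V && (U \proper V)) F0 V.
  apply: eq_bigl => V; rewrite properEneq (eq_sym U V).
  by case: (is_upset V); case: (U \subset V); case: (V == U).

by rewrite subrK.
Qed.

End Aux.

Theorem proposition4p1 (d : Order.disp_t) (L : finTBLatticeType d) (R : realType)
    (phi : L -> R) (Phi : {set L} -> R)
    (hcap : capacity phi) (hPhi : completely_monotone Phi)
    (hext : forall x : L, Phi (upclosure [set x]) = phi x) :
  (completely_alternating phi /\
     (forall F : {set L} -> R, mobius_inverse Phi F ->
        forall U : {set L}, is_upset U -> ~ co_principal U -> F U = 0))
  <->
  (forall a b : L,
     Phi (upclosure [set a; b]) = phi a + phi b - phi (Order.join a b)).
Proof.
case: hcap => _ h0 _.
split.
  move=> [_ hvan] a b.
  pose F0' := @F0 d L R Phi.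
  have hmob : mobius_inverse Phi F0' := @F0_mob d L R Phi.
  have hv := hvan _ hmob.
  rewrite up2E -!hext -/(up1 _) -/(up1 _) -/(up1 _).
  rewrite !hmob; try by apply: up1_upset.
    2: by apply: setU_upset; apply: up1_upset.
  have E S : \sum_(V | is_upset V && (S \subset V)) F0' V =
    \sum_(V | is_upset V) (if S \subset V then F0' V else 0) by rewrite big_mkcondr.
  rewrite !E -big_split /= -sumrB; apply: eq_bigr => V hV.
  rewrite subUset !up1_sub //.
  case: (eqVneq (F0' V) 0) => [->|hne]; first by rewrite !if_same addr0 subr0.
  case: (boolP [exists c, ~: V == [set y | (y <= c)%O]]) => [/existsP[c /eqP hc]|hno].
    have memV x : (x \in V) = ~~ (x <= c)%O.
      by move/setP: hc => /(_ x); rewrite in_setC inE => <-; rewrite negbK.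
    rewrite !memV leUx.
    by case: (a <= c)%O; case: (b <= c)%O => /=; lra.
  exfalso; move/eqP: hne; apply; apply: hv => // -[c hc].
  by move/negP: hno; apply; apply/existsP; exists c; apply/eqP.
move=> hii; split; first exact: (@ca d L R Phi phi hPhi hext hii).
move=> F hF U hU hnc.
case: (eqVneq U setT) => [->|hUT].
  have hT : is_upset [set: L] by rewrite -(@up1_bot d L); apply: up1_upset.
  have := hF setT hT.
  rewrite (big_pred1 setT); last first.
    move=> V /=; rewrite subTset; case: (V =P setT) => [->|]; rewrite ?andbT ?andbF //.
  by move<-; rewrite -(@up1_bot d L) /up1 hext h0.
case: (F U =P 0) => // hne; exfalso; apply: hnc.
apply: coprin => // a b ha hb; apply/negP => hab; apply: hne.
exact: (@vanish d L R Phi phi hPhi hext F hF hii U a b hU ha hb hab).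
Qed.
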